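(* Let $D\ge 2$ and let $b_1<b_2<\dots<b_m$ be positive integers with $2\le b_{i+1}/b_i\le D$ for all $1\le i<m$. After $\mathcal{O}(m)$ preprocessing time, for any given integer $t$ one can locate $t$ in the sequence (i.e. find the index $i$ with $b_i\le t<b_{i+1}$, or report $t<b_1$ or $t\ge b_m$) in $\mathcal{O}(\log\log D)$ time.
   Context: Complexity is measured in a unit-cost RAM model in which arithmetic operations on the integers involved, including computing $\lfloor\log_2 x\rfloor$, take constant time. *)

(* Defs.v *)
From Stdlib Require Import ZArith List Arith Bool.
Import ListNotations.
Open Scope Z_scope.

(** Each instruction costs one time unit; arithmetic (+, -, *, floor division,
    mod, floor log2) and comparisons are unit cost, as is indirect addressing. *)

Inductive binop := OAdd | OSub | OMul | ODiv | OMod.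

Definition eval_binop (o : binop) (x y : Z) : Z :=
  match o with
  | OAdd => x + y | OSub => x - y | OMul => x * y
  | ODiv => x / y | OMod => x mod y
  end.

Inductive instr :=
| IConst (d c : Z)
| IBin (o : binop) (d a b : Z)
| ILog (d a : Z)                (* M[d] := floor(log2 M[a])  (0 if M[a] <= 0) *)
| ILoad (d a : Z)
| IStore (a s : Z)
| IJlt (a b : Z) (l : nat)
| IJmp (l : nat)
| IHalt.

Definition program := list instr.
Definition memory := Z -> Z.
Definition config : Type := (nat * memory)%type.

Definition upd (M : memory) (a v : Z) : memory :=
  fun x => if Z.eqb x a then v else M x.

Definition fetch (P : program) (pc : nat) : instr := nth pc P IHalt.

Definition step (P : program) (c : config) : config :=
  let (pc, M) := c in
  match fetch P pc with
  | IConst d v => (S pc, upd M d v)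
  | IBin o d a b => (S pc, upd M d (eval_binop o (M a) (M b)))
  | ILog d a => (S pc, upd M d (Z.log2 (M a)))
  | ILoad d a => (S pc, upd M d (M (M a)))
  | IStore a s => (S pc, upd M (M a) (M s))
  | IJlt a b l => if Z.ltb (M a) (M b) then (l, M) else (S pc, M)
  | IJmp l => (l, M)
  | IHalt => (pc, M)
  end.

Definition halted (P : program) (c : config) : Prop := fetch P (fst c) = IHalt.

Definition run (P : program) (k : nat) (M : memory) : config :=
  Nat.iter k (step P) (0%nat, M).

(* P started on memory M halts within k steps with final memory M'.
   (Once halted the configuration is fixed, so M' is well defined.) *)
Definition halts_within (P : program) (k : nat) (M M' : memory) : Prop :=
  halted P (run P k M) /\ snd (run P k M) = M'.

(** * Input conventions.
    Preprocessing input: M[0] = m, M[i] = b_i for 1 <= i <= m, all else 0.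
    Query input: the memory left by preprocessing, with M[-1] := t.
    Query output: M[-2]. *)
Definition input_mem (b : list Z) : memory :=
  fun x => if Z.eqb x 0 then Z.of_nat (length b)
           else if (0 <? x) && (x <=? Z.of_nat (length b)) then
             nth (Z.to_nat x - 1) b 0
           else 0.

(* 1-based access b_i *)
Definition bi (b : list Z) (i : nat) : Z := nth (i - 1) b 0.

Definition located (b : list Z) (t : Z) (i : nat) : Prop :=
  let m := length b in
  (i = 0%nat /\ t < bi b 1) \/
  ((1 <= i < m)%nat /\ bi b i <= t < bi b (S i)) \/
  (i = m /\ bi b m <= t).

Definition gap_seq (D : nat) (b : list Z) : Prop :=
  (forall i, (1 <= i <= length b)%nat -> 0 < bi b i) /\
  (forall i, (1 <= i < length b)%nat ->
     2 * bi b i <= bi b (S i) /\ bi b (S i) <= Z.of_nat D * bi b i).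

(* Main.v *)
Require Import Defs.
From Stdlib Require Import ZArith List Arith Lia.
Import ListNotations.
Open Scope Z_scope.

Definition reach P c c' n := Nat.iter n (step P) c = c'.
Lemma reach0 P c : reach P c c 0.
Proof. reflexivity. Qed.
Lemma reachS P c c' n : reach P (step P c) c' n -> reach P c c' (S n).
Proof. unfold reach; rewrite Nat.iter_succ_r; auto. Qed.
Lemma reach_trans P c1 c2 c3 a b :
  reach P c1 c2 a -> reach P c2 c3 b -> reach P c1 c3 (a + b).
Proof. unfold reach. intros H1 H2. rewrite Nat.add_comm, Nat.iter_add. congruence. Qed.

Lemma upd_eq M d v : upd M d v d = v.
Proof. unfold upd. now rewrite Z.eqb_refl. Qed.
Lemma upd_eq' M d v x : x = d -> upd M d v x = v.
Proof. intros ->; apply upd_eq. Qed.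
Lemma upd_neq M d v x : x <> d -> upd M d v x = M x.
Proof. unfold upd. intros H. now rewrite (proj2 (Z.eqb_neq x d) H). Qed.

Ltac usimp := repeat match goal with
  | |- context [upd ?M ?d ?v ?x] =>
     first [ rewrite (upd_eq' M d v x) by lia | rewrite (upd_neq M d v x) by lia ]
  end.
Ltac jlt := first [rewrite (proj2 (Z.ltb_lt _ _)) by lia | rewrite (proj2 (Z.ltb_ge _ _)) by lia].

Definition Ppre : program := [
 IConst (-20) 1;
 ILog (-3) 1;
 ILoad (-21) 0;
 ILog (-21) (-21);
 IBin OSub (-21) (-21) (-3);
 IBin ODiv (-21) (-21) 0;
 IBin OAdd (-4) (-21) (-20);
 IBin OAdd (-5) 0 (-20);
 IBin OAdd (-5) (-5) (-20);
 IConst (-22) 1;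
 IJlt 0 (-22) 19;
 ILoad (-23) (-22);
 ILog (-23) (-23);
 IBin OSub (-23) (-23) (-3);
 IBin ODiv (-23) (-23) (-4);
 IBin OAdd (-23) (-23) (-5);
 IStore (-23) (-22);
 IBin OAdd (-22) (-22) (-20);
 IJmp 10;
 IConst (-26) 0;
 IBin OAdd (-24) (-5) (-26);
 IBin OAdd (-25) (-5) 0;
 IJlt (-24) (-25) 24;
 IJmp 31;
 ILoad (-27) (-24);
 IJlt (-26) (-27) 29;
 IBin OSub (-28) (-24) (-20);
 ILoad (-27) (-28);
 IStore (-24) (-27);
 IBin OAdd (-24) (-24) (-20);
 IJmp 22 ].

Definition Pq : program := [
 IConst (-2) 0;
 IJlt (-1) 1 26;
 IConst (-33) 0;
 IConst (-38) 2;
 ILog (-30) (-1);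
 IBin OSub (-30) (-30) (-3);
 IBin ODiv (-30) (-30) (-4);
 IBin OSub (-31) 0 (-20);
 IJlt (-30) (-31) 10;
 IBin OAdd (-30) (-31) (-33);
 IBin OAdd (-34) (-30) (-5);
 ILoad (-35) (-34);
 IBin OSub (-34) (-34) (-20);
 ILoad (-36) (-34);
 IJlt (-36) (-35) 16;
 IJmp 25;
 IBin OAdd (-37) (-36) (-35);
 IBin OAdd (-37) (-37) (-20);
 IBin ODiv (-37) (-37) (-38);
 ILoad (-39) (-37);
 IJlt (-1) (-39) 23;
 IBin OAdd (-36) (-37) (-33);
 IJmp 14;
 IBin OSub (-35) (-37) (-20);
 IJmp 14;
 IBin OAdd (-2) (-36) (-33) ].

Ltac st P := apply reachS; cbn [step fetch nth P eval_binop fst snd]; usimp.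

Section Math.
Variable D : nat.
Variable b : list Z.
Definition mz := Z.of_nat (length b).
Definition bz (x : Z) := bi b (Z.to_nat x).
Definition L x := Z.log2 (bz x).
Definition gg := (L mz - L 1) / mz + 1.
Definition qj x := (L x - L 1) / gg.
Definition Fs q v := 0 <= v <= mz /\ forall j, 1 <= j <= mz -> (j <= v <-> qj j <= q).
Definition G j q v := (v = 0 /\ forall j', 1 <= j' < j -> qj j' <> q) \/
   (1 <= v < j /\ qj v = q /\ forall j', v < j' < j -> qj j' <> q).
Definition Dz := Z.of_nat D.

Hypothesis Hm : 1 <= mz.
Hypothesis HD : 2 <= Dz.
Hypothesis Hpos : forall x, 1 <= x <= mz -> 0 < bz x.
Hypothesis Hgap : forall x, 1 <= x < mz -> 2 * bz x <= bz (x+1) /\ bz (x+1) <= Dz * bz x.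

Lemma L_nonneg x : 0 <= L x.
Proof. apply Z.log2_nonneg. Qed.

Lemma L_succ x : 1 <= x < mz -> L x + 1 <= L (x+1).
Proof.
  intros H. unfold L. destruct (Hgap x H) as [H1 _].
  pose proof (Hpos x ltac:(lia)).
  pose proof (Z.log2_double (bz x) H0).
  pose proof (Z.log2_le_mono _ _ H1). lia.
Qed.

Lemma L_up x : 1 <= x < mz -> L (x+1) <= L x + Z.log2 Dz + 1.
Proof.
  intros H. unfold L. destruct (Hgap x H) as [_ H1].
  pose proof (Hpos x ltac:(lia)).
  pose proof (Z.log2_mul_above Dz (bz x) ltac:(lia) ltac:(lia)).
  pose proof (Z.log2_le_mono _ _ H1). lia.
Qed.

Lemma L_grow x k : 1 <= x -> x + Z.of_nat k <= mz ->
  L x + Z.of_nat k <= L (x + Z.of_nat k) <= L x + Z.of_nat k * (Z.log2 Dz + 1).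
Proof.
  intros Hx. induction k; intros Hk.
  - simpl. rewrite !Z.add_0_r. lia.
  - rewrite Nat2Z.inj_succ in *.
    replace (x + Z.succ (Z.of_nat k)) with ((x + Z.of_nat k) + 1) by lia.
    pose proof (L_succ (x + Z.of_nat k) ltac:(lia)).
    pose proof (L_up (x + Z.of_nat k) ltac:(lia)).
    specialize (IHk ltac:(lia)). nia.
Qed.

Lemma L_mono x y : 1 <= x <= y -> y <= mz -> L x + (y - x) <= L y.
Proof.
  intros H1 H2. pose proof (L_grow x (Z.to_nat (y - x)) ltac:(lia)).
  rewrite Z2Nat.id in H by lia. replace (x + (y-x)) with y in H by lia. lia.
Qed.

Lemma L_total : L mz - L 1 <= (mz - 1) * (Z.log2 Dz + 1).
Proof.
  pose proof (L_grow 1 (Z.to_nat (mz - 1)) ltac:(lia)).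
  rewrite Z2Nat.id in H by lia. replace (1 + (mz-1)) with mz in H by lia. lia.
Qed.

Lemma gg_pos : 1 <= gg.
Proof.
  unfold gg. pose proof (L_mono 1 mz ltac:(lia) ltac:(lia)).
  pose proof (Z.div_pos (L mz - L 1) mz ltac:(lia) ltac:(lia)). lia.
Qed.

Lemma gg_bound : gg <= Z.log2 Dz + 2.
Proof.
  unfold gg. pose proof L_total.
  assert ((L mz - L 1) / mz <= Z.log2 Dz + 1).
  { apply Z.div_le_upper_bound. lia. pose proof (Z.log2_nonneg Dz). nia. }
  lia.
Qed.

Lemma gg_mul : L mz - L 1 < mz * gg.
Proof.
  unfold gg. pose proof (Z.div_mod (L mz - L 1) mz ltac:(lia)).
  pose proof (Z.mod_pos_bound (L mz - L 1) mz ltac:(lia)). nia.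
Qed.

Lemma qj_mono x y : 1 <= x <= y -> y <= mz -> qj x <= qj y.
Proof.
  intros. unfold qj. apply Z.div_le_mono. pose proof gg_pos; lia.
  pose proof (L_mono x y); lia.
Qed.

Lemma qj_range x : 1 <= x <= mz -> 0 <= qj x <= mz - 1.
Proof.
  intros H. pose proof gg_pos. pose proof gg_mul. split.
  - unfold qj. apply Z.div_pos; [|lia]. pose proof (L_mono 1 x); lia.
  - assert (qj x < mz); [|lia]. unfold qj. apply Z.div_lt_upper_bound. lia.
    pose proof (L_mono x mz); lia.
Qed.

Lemma div_lt_inv a c g : 0 < g -> a / g < c / g -> a < c.
Proof. intros. destruct (Z.le_gt_cases c a) as [H1|H1]; auto.
  pose proof (Z.div_le_mono c a g H H1). lia. Qed.

Lemma lt_of_L x t : 1 <= x <= mz -> 0 < t -> L x < Z.log2 t -> bz x < t.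
Proof.
  intros Hx Ht HL. pose proof (Hpos x Hx).
  destruct (Z.log2_spec (bz x) H) as [_ H2]. destruct (Z.log2_spec t Ht) as [H3 _].
  unfold L in HL.
  assert (2 ^ Z.succ (Z.log2 (bz x)) <= 2 ^ Z.log2 t).
  { apply Z.pow_le_mono_r; lia. }
  lia.
Qed.

Lemma gt_of_L x t : 1 <= x <= mz -> 0 < t -> Z.log2 t < L x -> t < bz x.
Proof.
  intros Hx Ht HL. pose proof (Hpos x Hx).
  destruct (Z.log2_spec (bz x) H) as [H2 _]. destruct (Z.log2_spec t Ht) as [_ H3].
  unfold L in HL.
  assert (2 ^ Z.succ (Z.log2 t) <= 2 ^ Z.log2 (bz x)).
  { apply Z.pow_le_mono_r; lia. }
  lia.
Qed.

Lemma bz_mono x y : 1 <= x < y -> y <= mz -> bz x < bz y.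
Proof.
  intros. pose proof (L_mono x y ltac:(lia) ltac:(lia)).
  pose proof (Hpos x ltac:(lia)).
  apply gt_of_L; try lia. unfold L in *. lia.
Qed.

Definition Inv t lo hi := 0 <= lo <= hi /\ hi <= mz /\ (1 <= lo -> bz lo <= t) /\
  (hi < mz -> t < bz (hi + 1)).

Lemma query_init t lo hi : bz 1 <= t ->
  let q0 := (Z.log2 t - L 1) / gg in
  let q := if q0 <? mz - 1 then q0 else mz - 1 + 0 in
  Fs q hi -> Fs (q - 1) lo -> Inv t lo hi /\ hi - lo <= gg.
Proof.
  intros Ht q0 q Fh Fl. pose proof gg_pos. pose proof (Hpos 1 ltac:(lia)).
  assert (HL1 : L 1 <= Z.log2 t) by (apply Z.log2_le_mono; lia).
  assert (Hq0 : 0 <= q0) by (apply Z.div_pos; lia).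
  assert (Hqq : q <= q0 /\ 0 <= q /\ (q < q0 -> q = mz - 1)).
  { unfold q. destruct (Z.ltb_spec q0 (mz - 1)); lia. }
  destruct Fh as [Fh1 Fh2]. destruct Fl as [Fl1 Fl2].
  assert (Hlh : lo <= hi).
  { destruct (Z.le_gt_cases lo 0). lia.
    assert (lo <= lo) as E by lia. apply (Fl2 lo ltac:(lia)) in E.
    apply (Fh2 lo ltac:(lia)). lia. }
  split; [split; [lia|split;[lia|split]]|].
  - intros Hlo. assert (lo <= lo) as E by lia. apply (Fl2 lo ltac:(lia)) in E.
    apply Z.lt_le_incl. apply lt_of_L; try lia.
    cut (L lo - L 1 < Z.log2 t - L 1); [lia|].
    apply (div_lt_inv _ _ gg); [lia|]. fold (qj lo). fold q0. lia.
  - intros Hhi. assert (~ hi + 1 <= hi) as E by lia.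
    rewrite (Fh2 (hi+1) ltac:(lia)) in E.
    pose proof (qj_range (hi+1) ltac:(lia)).
    apply gt_of_L; try lia.
    cut (Z.log2 t - L 1 < L (hi+1) - L 1); [lia|].
    apply (div_lt_inv _ _ gg); [lia|]. fold (qj (hi+1)). fold q0. lia.
  - destruct (Z.le_gt_cases hi lo). lia.
    assert (~ lo + 1 <= lo) as E by lia.
    rewrite (Fl2 (lo+1) ltac:(lia)) in E.
    assert (hi <= hi) as E2 by lia. rewrite (Fh2 hi ltac:(lia)) in E2.
    pose proof (qj_mono (lo+1) hi ltac:(lia) ltac:(lia)).
    unfold qj in *.
    pose proof (Z.div_mod (L (lo+1) - L 1) gg ltac:(lia)).
    pose proof (Z.mod_pos_bound (L (lo+1) - L 1) gg ltac:(lia)).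
    pose proof (Z.div_mod (L hi - L 1) gg ltac:(lia)).
    pose proof (Z.mod_pos_bound (L hi - L 1) gg ltac:(lia)).
    pose proof (L_mono (lo+1) hi ltac:(lia) ltac:(lia)).
    assert ((L (lo + 1) - L 1) / gg = (L hi - L 1) / gg) as E3 by lia.
    rewrite E3 in *. nia.
Qed.


Lemma log2_half s s' : 0 <= s' -> 1 <= s -> 2 * s' <= s -> Z.log2 (2 * s') + 1 <= Z.log2 (2 * s).
Proof.
  intros. rewrite (Z.log2_double s) by lia.
  destruct (Z.eq_dec s' 0) as [->|Hs]. change (Z.log2 (2*0)) with 0. pose proof (Z.log2_nonneg s). lia.
  pose proof (Z.log2_le_mono _ _ H1). rewrite Z.log2_double in * by lia. lia.
Qed.

Definition QBase t (M : memory) := M (-1) = t /\ M (-20) = 1 /\ M (-33) = 0 /\ M (-38) = 2 /\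
  forall x, 1 <= x <= mz -> M x = bz x.

Ltac qb := match goal with H : QBase _ _ |- _ =>
  let h1 := fresh "q1" in let h2 := fresh "q2" in let h3 := fresh "q3" in
  let h4 := fresh "q4" in let h5 := fresh "q5" in destruct H as (h1 & h2 & h3 & h4 & h5) end.

Lemma bs_loop t : forall n M lo hi, (Z.to_nat (hi - lo) <= n)%nat -> QBase t M ->
  M (-36) = lo -> M (-35) = hi -> Inv t lo hi ->
  exists k M' i, reach Pq (14%nat, M) (26%nat, M') k /\
    (k <= 8 * (Z.to_nat (Z.log2 (2 * (hi - lo))) + 1))%nat /\ M' (-2) = i /\ Inv t i i.
Proof.
  induction n; intros M lo hi Hn HQ H36 H35 HI; pose proof HQ as HQ'; qb;
    destruct HI as (I1 & I2 & I3 & I4).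
  - assert (Heq : hi = lo) by lia. rewrite Heq in *.
    do 2 eexists. exists lo. split; [|split; [|split]].
    + st Pq. rewrite H36, H35. jlt. st Pq. st Pq. rewrite H36, q3. apply reach0.
    + lia.
    + usimp. lia.
    + repeat split; auto; lia.
  - destruct (Z.le_gt_cases hi lo).
    { assert (Heq : hi = lo) by lia. rewrite Heq in *.
      do 2 eexists. exists lo. split; [|split; [|split]].
      + st Pq. rewrite H36, H35. jlt. st Pq. st Pq. rewrite H36, q3. apply reach0.
      + lia.
      + usimp. lia.
      + repeat split; auto; lia. }
    set (mid := (lo + hi + 1) / 2).
    pose proof (Z.div_mod (lo + hi + 1) 2 ltac:(lia)) as Dm.
    pose proof (Z.mod_pos_bound (lo + hi + 1) 2 ltac:(lia)) as Dm2. fold mid in Dm.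
    assert (Hmid : lo + 1 <= mid <= hi) by lia.
    destruct (Z.ltb_spec t (bz mid)) as [Hlt|Hge].
    + destruct (IHn (upd (upd (upd (upd (upd M (-37) (lo + hi)) (-37) (lo + hi + 1)) (-37) mid)
          (-39) (bz mid)) (-35) (mid - 1)) lo (mid - 1)) as (k & M' & i & R & Hk & Hi & Inv').
      * lia.
      * repeat split; try (usimp; lia). intros x Hx. usimp. auto.
      * usimp. auto.
      * usimp. auto.
      * repeat split; try lia. auto. intros _. replace (mid - 1 + 1) with mid by lia. auto.
      * exists (8 + k)%nat, M', i. split; [|split; [|split]]; auto.
        -- apply (fun HH => reach_trans _ _ _ _ _ _ HH R).
           st Pq. rewrite H36, H35. jlt. st Pq. rewrite H36, H35. st Pq. rewrite q2. st Pq. rewrite q4.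
           fold mid. st Pq. rewrite q5 by lia. st Pq. rewrite q1. jlt. st Pq. rewrite q2. st Pq.
           apply reach0.
        -- pose proof (log2_half (hi - lo) (mid - 1 - lo) ltac:(lia) ltac:(lia) ltac:(lia)).
           pose proof (Z.log2_nonneg (2 * (mid - 1 - lo))). lia.
    + destruct (IHn (upd (upd (upd (upd (upd M (-37) (lo + hi)) (-37) (lo + hi + 1)) (-37) mid)
          (-39) (bz mid)) (-36) (mid + 0)) mid hi) as (k & M' & i & R & Hk & Hi & Inv').
      * lia.
      * repeat split; try (usimp; lia). intros x Hx. usimp. auto.
      * usimp. lia.
      * usimp. auto.
      * repeat split; try lia; auto.
      * exists (8 + k)%nat, M', i. split; [|split; [|split]]; auto.
        -- apply (fun HH => reach_trans _ _ _ _ _ _ HH R).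
           st Pq. rewrite H36, H35. jlt. st Pq. rewrite H36, H35. st Pq. rewrite q2. st Pq. rewrite q4.
           fold mid. st Pq. rewrite q5 by lia. st Pq. rewrite q1. jlt. st Pq. rewrite q3. st Pq.
           apply reach0.
        -- pose proof (log2_half (hi - lo) (hi - mid) ltac:(lia) ltac:(lia) ltac:(lia)).
           pose proof (Z.log2_nonneg (2 * (hi - mid))). lia.
Qed.


Definition PostPre (M : memory) := M 0 = mz /\ (forall x, 1 <= x <= mz -> M x = bz x) /\
  M (-3) = L 1 /\ M (-4) = gg /\ M (-5) = mz + 2 /\ M (-20) = 1 /\
  forall q, -1 <= q < mz -> Fs q (M (mz + 2 + q)).

Lemma query_ok Mf t : PostPre Mf ->
  exists k M' i, reach Pq (0%nat, upd Mf (-1) t) (26%nat, M') k /\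
   (k <= 14 + 8 * (Z.to_nat (Z.log2 (2 * gg)) + 1))%nat /\ M' (-2) = i /\ Inv t i i.
Proof.
  intros (P0 & Pb & P3 & P4 & P5 & P20 & PF).
  pose proof gg_pos as Hg.
  destruct (Z.ltb_spec t (bz 1)) as [Ht|Ht].
  - do 2 eexists. exists 0. split; [|split; [|split]].
    + st Pq. st Pq. rewrite Pb by lia. jlt. apply reach0.
    + lia.
    + usimp. reflexivity.
    + repeat split; try lia. intros _. exact Ht.
  - pose proof (Hpos 1 ltac:(lia)) as Hb1.
    assert (HL1 : L 1 <= Z.log2 t) by (apply Z.log2_le_mono; lia).
    set (q0 := (Z.log2 t - L 1) / gg).
    assert (Hq0 : 0 <= q0) by (apply Z.div_pos; lia).
    pose proof (query_init t (Mf (mz + 2 + (q0 - 1))) (Mf (mz + 2 + q0)) Ht) as QI0.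
    pose proof (query_init t (Mf (mz + 2 + (mz - 1 + 0 - 1))) (Mf (mz + 2 + (mz - 1 + 0))) Ht) as QI1.
    cbv zeta in QI0, QI1. fold q0 in QI0, QI1.
    assert (Pre : exists lo hi M1 n, reach Pq (0%nat, upd Mf (-1) t) (14%nat, M1) n /\ (n <= 14)%nat /\
       QBase t M1 /\ M1 (-36) = lo /\ M1 (-35) = hi /\ Inv t lo hi /\ hi - lo <= gg).
    { destruct (Z.ltb_spec q0 (mz - 1)) as [Hq|Hq].
      + destruct QI0 as [QI QD]. apply PF; lia. apply PF; lia.
        do 4 eexists. split.
        * st Pq. st Pq. rewrite Pb by lia. jlt. st Pq. st Pq. st Pq. st Pq. rewrite P3.
          st Pq. rewrite P4. fold q0. st Pq. rewrite P0, P20. st Pq. jlt.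
          st Pq. rewrite P5. st Pq. replace (q0 + (mz + 2)) with (mz + 2 + q0) by lia.
          st Pq. rewrite P20. st Pq. replace (mz + 2 + q0 - 1) with (mz + 2 + (q0 - 1)) by lia.
          apply reach0.
        * split; [lia|]. split; [repeat split; try (usimp; lia); intros x Hx; usimp; auto|].
          split; [usimp; reflexivity|]. split; [usimp; reflexivity|]. auto.
      + destruct QI1 as [QI QD]. apply PF; lia. apply PF; lia.
        do 4 eexists. split.
        * st Pq. st Pq. rewrite Pb by lia. jlt. st Pq. st Pq. st Pq. st Pq. rewrite P3.
          st Pq. rewrite P4. fold q0. st Pq. rewrite P0, P20. st Pq. jlt. st Pq.
          st Pq. rewrite P5. st Pq. replace (mz - 1 + 0 + (mz + 2)) with (mz + 2 + (mz - 1 + 0)) by lia.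
          st Pq. rewrite P20. st Pq. replace (mz + 2 + (mz - 1 + 0) - 1) with (mz + 2 + (mz - 1 + 0 - 1)) by lia.
          apply reach0.
        * split; [lia|]. split; [repeat split; try (usimp; lia); intros x Hx; usimp; auto|].
          split; [usimp; reflexivity|]. split; [usimp; reflexivity|]. auto. }
    destruct Pre as (lo & hi & M1 & n1 & R1 & Hn1 & HQ & H36 & H35 & HI & HD').
    destruct (bs_loop t (Z.to_nat (hi - lo)) M1 lo hi (le_n _) HQ H36 H35 HI)
      as (k & M' & i & R & Hk & Hi & Inv').
    exists (n1 + k)%nat, M', i. split; [|split; [|split]]; auto.
    + exact (reach_trans _ _ _ _ _ _ R1 R).
    + destruct HI as (I1 & I2 & _).
      assert (Z.log2 (2 * (hi - lo)) <= Z.log2 (2 * gg)) by (apply Z.log2_le_mono; lia).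
      pose proof (Z.log2_nonneg (2 * (hi - lo))). lia.
Qed.


Definition Base (M : memory) := M 0 = mz /\ (forall x, 1 <= x <= mz -> M x = bz x) /\
  M (mz + 1) = 0 /\ M (-3) = L 1 /\ M (-4) = gg /\ M (-5) = mz + 2 /\ M (-20) = 1.

Lemma G_init q : G 1 q 0.
Proof. left. split; auto. intros; lia. Qed.

Lemma G_eq j q : qj j = q -> 1 <= j -> G (j + 1) q j.
Proof. intros. right. repeat split; auto; lia. Qed.

Lemma G_neq j q v : qj j <> q -> G j q v -> G (j + 1) q v.
Proof.
  intros H [[-> H1]|(H1 & H2 & H3)].
  - left. split; auto. intros j' Hj'. destruct (Z.eq_dec j' j); [subst; auto|apply H1; lia].
  - right. repeat split; try lia. auto. intros j' Hj'.
    destruct (Z.eq_dec j' j); [subst; auto|apply H3; lia].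
Qed.

Lemma G_range q v : G (mz + 1) q v -> 0 <= v <= mz.
Proof. intros [[-> _]|(H1 & _)]; lia. Qed.

Lemma G_pos q v : G (mz + 1) q v -> 0 < v -> Fs q v.
Proof.
  intros [[-> _]|(H1 & H2 & H3)] Hv; [lia|].
  split; [lia|]. intros j Hj. split.
  - intros. rewrite <- H2. apply qj_mono; lia.
  - intros Hq. destruct (Z.le_gt_cases j v); auto.
    pose proof (qj_mono v j ltac:(lia) ltac:(lia)). specialize (H3 j ltac:(lia)). lia.
Qed.

Lemma G_zero q w : G (mz + 1) q 0 -> Fs (q - 1) w -> Fs q w.
Proof.
  intros [[_ H1]|(H1 & _)] [F1 F2]; [|lia].
  split; auto. intros j Hj. rewrite F2 by auto. specialize (H1 j ltac:(lia)). lia.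
Qed.

Lemma Fs_m1 : Fs (-1) 0.
Proof. split; [lia|]. intros j Hj. pose proof (qj_range j Hj). lia. Qed.

Ltac bs := match goal with H : Base _ |- _ =>
  let h1 := fresh "b0" in let h2 := fresh "bb" in let h3 := fresh "bm" in
  let h4 := fresh "b3" in let h5 := fresh "b4" in let h6 := fresh "b5" in let h7 := fresh "b20" in
  destruct H as (h1 & h2 & h3 & h4 & h5 & h6 & h7) end.

Lemma loop1 : forall n M j, Z.to_nat (mz + 1 - j) = n -> Base M -> M (-22) = j ->
  1 <= j <= mz + 1 -> (forall q, 0 <= q < mz -> G j q (M (mz + 2 + q))) ->
  exists k M', reach Ppre (10%nat, M) (19%nat, M') k /\ (k <= 9 * n + 1)%nat /\ Base M' /\
    forall q, 0 <= q < mz -> G (mz + 1) q (M' (mz + 2 + q)).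
Proof.
  induction n; intros M j Hn HB H22 Hj HG; pose proof HB as HB'; bs.
  - assert (Hjj : j = mz + 1) by lia. rewrite Hjj in *.
    exists 1%nat, M. split; [|split; [lia|split; auto]].
    st Ppre. rewrite b0, H22. jlt. apply reach0.
  - pose proof (qj_range j ltac:(lia)) as Hqr.
    assert (R1 : exists M1, reach Ppre (10%nat, M) (10%nat, M1) 9 /\
       Base M1 /\ M1 (-22) = j + 1 /\ forall q, 0 <= q < mz -> G (j + 1) q (M1 (mz + 2 + q))).
    { eexists. split.
      - st Ppre. rewrite b0, H22. jlt. st Ppre. rewrite H22, bb by lia. st Ppre. fold (L j).
        st Ppre. rewrite b3. st Ppre. rewrite b4. fold (qj j). st Ppre. rewrite b5.
        st Ppre. rewrite H22. st Ppre. rewrite H22, b20. st Ppre. apply reach0.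
      - split; [|split].
        + repeat split; try (usimp; auto; fail). intros x Hx. usimp. auto.
        + usimp. reflexivity.
        + intros q Hq. usimp. destruct (Z.eq_dec q (qj j)).
          * rewrite upd_eq' by lia. apply G_eq; auto; lia.
          * rewrite upd_neq by lia. usimp. apply G_neq; auto. }
    destruct R1 as (M1 & R1 & HB1 & H221 & HG1).
    destruct (IHn M1 (j + 1) ltac:(lia) HB1 H221 ltac:(lia) HG1) as (k & M' & R & Hk & HB' & HG').
    exists (9 + k)%nat, M'. split; [|split; [lia|split; auto]].
    exact (reach_trans _ _ _ _ _ _ R1 R).
Qed.

Lemma loop2 : forall n M q0, Z.to_nat (mz - q0) = n -> Base M ->
  M (-24) = mz + 2 + q0 -> M (-25) = mz + 2 + mz -> M (-26) = 0 -> 0 <= q0 <= mz ->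
  (forall q, -1 <= q < q0 -> Fs q (M (mz + 2 + q))) ->
  (forall q, q0 <= q < mz -> G (mz + 1) q (M (mz + 2 + q))) ->
  exists k M', reach Ppre (22%nat, M) (31%nat, M') k /\ (k <= 8 * n + 2)%nat /\ PostPre M'.
Proof.
  induction n; intros M q0 Hn HB H24 H25 H26 Hq0 HF HG; pose proof HB as HB'; bs.
  - assert (Hqq : q0 = mz) by lia. rewrite Hqq in *.
    exists 2%nat, M. split; [|split; [lia|]].
    + st Ppre. rewrite H24, H25. jlt. st Ppre. apply reach0.
    + split; [auto|]. split; [intros x Hx; apply bb; lia|]. do 4 (split; [auto|]).
      intros q Hq; apply HF; lia.
  - pose proof (G_range _ _ (HG q0 ltac:(lia))) as Hv.
    assert (R1 : exists M1 k1, reach Ppre (22%nat, M) (22%nat, M1) k1 /\ (k1 <= 8)%nat /\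
       Base M1 /\ M1 (-24) = mz + 2 + (q0 + 1) /\ M1 (-25) = mz + 2 + mz /\ M1 (-26) = 0 /\
       (forall q, -1 <= q < q0 + 1 -> Fs q (M1 (mz + 2 + q))) /\
       (forall q, q0 + 1 <= q < mz -> G (mz + 1) q (M1 (mz + 2 + q)))).
    { destruct (Z.ltb_spec 0 (M (mz + 2 + q0))) as [Hp|Hp].
      - do 2 eexists. split.
        + st Ppre. rewrite H24, H25. jlt. st Ppre. rewrite H24. st Ppre. rewrite H26. jlt.
          st Ppre. rewrite H24, b20. st Ppre. apply reach0.
        + split; [lia|]. split; [repeat split; try (usimp; auto; fail); intros x Hx; usimp; auto|].
          split; [usimp; lia|]. split; [usimp; auto|]. split; [usimp; auto|]. split.
          * intros q Hq. usimp. destruct (Z.eq_dec q q0).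
            -- subst q. apply G_pos; auto. apply HG; lia.
            -- apply HF; lia.
          * intros q Hq. usimp. apply HG; lia.
      - assert (E0 : M (mz + 2 + q0) = 0) by lia.
        do 2 eexists. split.
        + st Ppre. rewrite H24, H25. jlt. st Ppre. rewrite H24. st Ppre. rewrite H26. jlt.
          st Ppre. rewrite H24, b20. st Ppre. st Ppre. rewrite H24. st Ppre. rewrite H24, b20.
          st Ppre. apply reach0.
        + split; [lia|]. split; [repeat split; try (usimp; auto; fail); intros x Hx; usimp; auto|].
          split; [usimp; lia|]. split; [usimp; auto|]. split; [usimp; auto|]. split.
          * intros q Hq. usimp. destruct (Z.eq_dec q q0).
            -- subst q. rewrite upd_eq' by lia. usimp. apply G_zero. rewrite <- E0. apply HG; lia.
               replace (mz + 2 + q0 - 1) with (mz + 2 + (q0 - 1)) by lia. apply HF; lia.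
            -- rewrite upd_neq by lia. usimp. apply HF; lia.
          * intros q Hq. usimp. apply HG; lia. }
    destruct R1 as (M1 & k1 & R1 & Hk1 & HB1 & H241 & H251 & H261 & HF1 & HG1).
    destruct (IHn M1 (q0 + 1) ltac:(lia) HB1 H241 H251 H261 ltac:(lia) HF1 HG1) as (k & M' & R & Hk & HP).
    exists (k1 + k)%nat, M'. split; [|split; [lia|auto]].
    exact (reach_trans _ _ _ _ _ _ R1 R).
Qed.


Lemma im0 : input_mem b 0 = mz.
Proof. reflexivity. Qed.
Lemma imb x : 1 <= x <= mz -> input_mem b x = bz x.
Proof.
  intros H. unfold input_mem. rewrite (proj2 (Z.eqb_neq x 0)) by lia.
  unfold mz in H. rewrite (proj2 (Z.ltb_lt 0 x)) by lia. rewrite (proj2 (Z.leb_le _ _)) by lia.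
  reflexivity.
Qed.
Lemma imz x : mz < x -> input_mem b x = 0.
Proof.
  intros H. unfold input_mem. rewrite (proj2 (Z.eqb_neq x 0)) by lia.
  unfold mz in H. rewrite (proj2 (Z.leb_gt _ _)) by lia. destruct (0 <? x); reflexivity.
Qed.

Lemma pre_ok : exists k M, reach Ppre (0%nat, input_mem b) (31%nat, M) k /\
  (k <= 16 + 17 * Z.to_nat mz)%nat /\ PostPre M.
Proof.
  pose proof gg_pos as Hg.
  assert (R0 : exists M0, reach Ppre (0%nat, input_mem b) (10%nat, M0) 10 /\ Base M0 /\
     M0 (-22) = 1 /\ forall q, 0 <= q < mz -> G 1 q (M0 (mz + 2 + q))).
  { eexists. split.
    - st Ppre. st Ppre. rewrite (imb 1) by lia. fold (L 1). st Ppre. rewrite im0. usimp. rewrite (imb mz) by lia.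
      st Ppre. fold (L mz). st Ppre. st Ppre. rewrite im0. usimp. st Ppre. st Ppre. rewrite im0. usimp.
      st Ppre. st Ppre. apply reach0.
    - split; [|split].
      + split; [usimp; auto|]. split; [intros x Hx; usimp; apply imb; lia|].
        split; [usimp; apply imz; lia|]. split; [usimp; auto|]. split; [usimp; auto|].
        split; [usimp; lia|]. usimp; auto.
      + usimp; auto.
      + intros q Hq. usimp. rewrite imz by lia. apply G_init. }
  destruct R0 as (M0 & R0 & HB0 & H220 & HG0).
  destruct (loop1 (Z.to_nat (mz + 1 - 1)) M0 1 eq_refl HB0 H220 ltac:(lia) HG0)
    as (k1 & M1 & R1 & Hk1 & HB1 & HG1).
  assert (R2 : exists M2, reach Ppre (19%nat, M1) (22%nat, M2) 3 /\ Base M2 /\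
     M2 (-24) = mz + 2 + 0 /\ M2 (-25) = mz + 2 + mz /\ M2 (-26) = 0 /\
     forall q, 0 <= q < mz -> G (mz + 1) q (M2 (mz + 2 + q))).
  { pose proof HB1 as HB1'. bs. eexists. split.
    - st Ppre. st Ppre. rewrite b5. st Ppre. rewrite b5, b0. apply reach0.
    - split; [repeat split; try (usimp; auto; fail); intros x Hx; usimp; auto|].
      split; [usimp; lia|]. split; [usimp; lia|]. split; [usimp; auto|].
      intros q Hq. usimp. auto. }
  destruct R2 as (M2 & R2 & HB2 & H242 & H252 & H262 & HG2).
  destruct (loop2 (Z.to_nat (mz - 0)) M2 0 eq_refl HB2 H242 H252 H262 ltac:(lia)) as (k2 & M3 & R3 & Hk2 & HP).
  - intros q Hq. assert (q = -1) by lia. subst q.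
    replace (mz + 2 + -1) with (mz + 1) by lia. destruct HB2 as (_ & _ & -> & _). apply Fs_m1.
  - exact HG2.
  - exists (10 + k1 + 3 + k2)%nat, M3. split; [|split; auto].
    + apply (reach_trans _ _ _ _ _ _ (reach_trans _ _ _ _ _ _ (reach_trans _ _ _ _ _ _ R0 R1) R2) R3).
    + replace (mz + 1 - 1) with mz in Hk1 by lia. replace (mz - 0) with mz in Hk2 by lia. lia.
Qed.

End Math.
Lemma zlog2_nat n : Z.log2 (Z.of_nat n) = Z.of_nat (Nat.log2 n).
Proof.
  destruct n as [|n]. reflexivity.
  apply Z.log2_unique. lia.
  destruct (Nat.log2_spec (S n) ltac:(lia)) as [H1 H2].
  apply Nat2Z.inj_le in H1. apply Nat2Z.inj_lt in H2.
  rewrite Nat2Z.inj_pow in H1, H2. rewrite Nat2Z.inj_succ in H2.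
  change (Z.of_nat 2) with 2 in *. rewrite <- Z.add_1_r in H2. lia.
Qed.

Theorem mainTheorem11 :
  exists (Ppre Pq : program) (C : nat),
    forall (D : nat) (b : list Z),
      (2 <= D)%nat -> (1 <= length b)%nat -> gap_seq D b ->
      exists (k : nat) (M : memory),
        (k <= C * length b)%nat /\ halts_within Ppre k (input_mem b) M /\
        forall t : Z,
          exists (k' : nat) (M' : memory) (i : nat),
            (k' <= C * (1 + Nat.log2 (Nat.log2 D)))%nat /\
            halts_within Pq k' (upd M (-1) t) M' /\
            M' (-2) = Z.of_nat i /\ located b t i.
Proof.
  exists Ppre, Pq, 50%nat. intros D b HD Hlen [Hpos Hgap].
  assert (Hm : 1 <= mz b) by (unfold mz; lia).
  assert (HD' : 2 <= Dz D) by (unfold Dz; lia).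
  assert (Hpos' : forall x, 1 <= x <= mz b -> 0 < bz b x).
  { intros x Hx. unfold bz, mz in *. apply Hpos. lia. }
  assert (Hgap' : forall x, 1 <= x < mz b -> 2 * bz b x <= bz b (x+1) /\ bz b (x+1) <= Dz D * bz b x).
  { intros x Hx. unfold bz, mz, Dz in *. replace (Z.to_nat (x + 1)) with (S (Z.to_nat x)) by lia.
    apply Hgap. lia. }
  destruct (pre_ok D b Hm HD' Hpos' Hgap') as (k & M & R & Hk & HP).
  exists k, M. split; [|split].
  - unfold mz in Hk. rewrite Nat2Z.id in Hk. lia.
  - unfold halts_within, halted, run. unfold reach in R. rewrite R. split; reflexivity.
  - intros t. destruct (query_ok D b Hm HD' Hpos' Hgap' M t HP) as (k' & M' & i & R' & Hk' & Hi & HI).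
    exists k', M', (Z.to_nat i). destruct HI as (I1 & I2 & I3 & I4).
    split; [|split; [|split]].
    + pose proof (gg_bound D b Hm HD' Hpos' Hgap') as Hgb.
      pose proof (gg_pos D b Hm HD' Hpos' Hgap') as Hgp.
      unfold Dz in Hgb. rewrite zlog2_nat in Hgb.
      assert (Hl : (1 <= Nat.log2 D)%nat) by (pose proof (Nat.log2_le_mono 2 D HD) as HH; change (Nat.log2 2) with 1%nat in HH; lia).
      set (l := Nat.log2 D) in *.
      assert (Z.log2 (2 * gg b) <= Z.log2 (8 * Z.of_nat l)) by (apply Z.log2_le_mono; lia).
      replace (8 * Z.of_nat l) with (Z.of_nat l * 2 ^ 3) in H by lia.
      rewrite Z.log2_mul_pow2, zlog2_nat in H by lia.
      pose proof (Z.log2_nonneg (2 * gg b)). lia.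
    + unfold halts_within, halted, run. unfold reach in R'. rewrite R'. split; reflexivity.
    + rewrite Z2Nat.id by lia. auto.
    + unfold located. unfold mz, bz in *.
      destruct (Z.eq_dec i 0) as [->|Hi0].
      * left. split; auto. apply I4. lia.
      * destruct (Z.eq_dec i (Z.of_nat (length b))) as [->|Him].
        -- right; right. rewrite Nat2Z.id. split; auto. rewrite Nat2Z.id in I3. apply I3. lia.
        -- right; left. split; [lia|]. split. apply I3; lia.
           replace (S (Z.to_nat i)) with (Z.to_nat (i + 1)) by lia. apply I4. lia.
Qed.
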